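(* Let $g:\mathbb{R}^N\to\mathbb{R}\cup\{+\infty\}$ be proper and lower semi-continuous, let $f:\mathbb{R}^N\to\mathbb{R}$ be continuously differentiable such that, for some $\mathbf{L}\in\mathbb{S}_{++}(N)$, the gradient of $f\circ\mathbf{L}^{-1/2}$ is $1$-Lipschitz continuous, and assume $f^g:=f+g$ is bounded from below. Fix $a>0$, $x_0\in\mathbb{R}^N$, and a sequence of matrices $\mathbf{D}_k\in\mathbb{R}^{N\times R}$. For $k\ge0$ and $\boldsymbol\beta\in\mathbb{R}^R$ let $y^{(\boldsymbol\beta)}_k:=x_k+\mathbf{D}_k\boldsymbol\beta$ and $\ell(x;y):=g(x)+f(y)+\langle\nabla f(y),x-y\rangle$. Suppose the sequences $(x_k)_{k}$, $(\boldsymbol\beta_k)_k$, and symmetric matrices $(\mathbf{L}_k)_k$, $(\mathbf{T}_k)_k$ satisfy for all $k\ge0$: $$\ell(x_{k+1};y_k^{(\boldsymbol\beta_k)})+\tfrac12\|x_{k+1}-y_k^{(\boldsymbol\beta_k)}\|_{\mathbf{T}_k}^2\le f^g(x_k),$$ $\mathbf{T}_k-\mathbf{L}_k-a\mathbf{I}\in\mathbb{S}_+(N)$, and $$f(x_{k+1})\le f(y_k^{(\boldsymbol\beta_k)})+\langle\nabla f(y_k^{(\boldsymbol\beta_k)}),x_{k+1}-y_k^{(\boldsymbol\beta_k)}\rangle+\tfrac12\|x_{k+1}-y_k^{(\boldsymbol\beta_k)}\|_{\mathbf{L}_k}^2.$$ Suppose $(\mathbf{T}_k)_{k\in\mathbb{N}}$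 is bounded. Then $(f^g(x_k))_{k\in\mathbb{N}}$ is non-increasing. If, additionally, $g$ is continuous on its domain and $\operatorname{dist}(0,\partial f^g(x_{k+1}))\to0$ as $k\to\infty$, then every limit point of $(x_{k+1})_{k\in\mathbb{N}}$ is a stationary point of $f^g$.
   Context: $\mathbb{S}_{+}(N)$ (resp. $\mathbb{S}_{++}(N)$) denotes the set of symmetric positive semi-definite (resp. positive definite) $N\times N$ real matrices; $\mathbf{I}$ is the identity; $\|x\|_{\mathbf{V}}^2:=\langle x,\mathbf{V}x\rangle$. The Fréchet subdifferential $\hat\partial h(\bar x)$ of $h:\mathbb{R}^N\to\mathbb{R}\cup\{+\infty\}$ at $\bar x\in\operatorname{dom}h$ is the set of $v$ with $\liminf_{x\to\bar x,x\ne\bar x}\frac{h(x)-h(\bar x)-\langle v,x-\bar x\rangle}{\|x-\bar x\|}\ge0$; the limiting subdifferential $\partial h(\bar x)$ is the set of $v$ for which there exist $x_k\to\bar x$ with $h(x_k)\to h(\bar x)$ and $v_k\in\hat\partial h(x_k)$ with $v_k\to v$ (both empty outside $\operatorname{dom}h$); $\operatorname{dist}(0,\emptyset):=+\infty$. A stationary point of $h$ is a point $\bar x$ with $0\in\partial h(\bar x)$. *)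

(* Defs.v *)
From HB Require Import structures.
From mathcomp Require Import all_boot all_order all_algebra.
From mathcomp Require Import all_classical all_reals all_analysis.
Set Implicit Arguments. Unset Strict Implicit. Unset Printing Implicit Defensive.
Import Order.TTheory GRing.Theory Num.Theory.
Import numFieldNormedType.Exports.
Local Open Scope classical_set_scope.
Local Open Scope ring_scope.

Section Defs.
Variables (R : realType) (N : nat).
Implicit Types (x y v : 'cV[R]_N) (A : 'M[R]_N).

Definition dotv x y : R := (x^T *m y) 0 0.
Definition enorm x : R := Num.sqrt (dotv x x).
Definition qnorm2 A x : R := dotv x (A *m x).

Definition symm_mx A : Prop := A^T = A.
Definition psd A : Prop := symm_mx A /\ forall x, 0 <= qnorm2 A x.
Definition pd A : Prop := symm_mx A /\ forall x, x != 0 -> 0 < qnorm2 A x.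

Definition grad (f : 'cV[R]_N -> R) x : 'cV[R]_N :=
  \col_i ('d f x (delta_mx i 0 : 'cV[R]_N)).

Definition cont_diff (f : 'cV[R]_N -> R) : Prop :=
  (forall x, differentiable f x) /\ continuous (grad f).

Definition edom (h : 'cV[R]_N -> \bar R) := [set x | h x < +oo]%E.
Definition proper_fn (h : 'cV[R]_N -> \bar R) : Prop :=
  (forall x, -oo < h x)%E /\ exists x, (h x < +oo)%E.
Definition lsc (h : 'cV[R]_N -> \bar R) : Prop :=
  forall x (t : R), (t%:E < h x)%E -> \forall y \near x, (t%:E < h y)%E.

(* Frechet subdifferential: liminf_{z -> xb, z <> xb}
   (h z - h xb - <v, z - xb>)/||z - xb|| >= 0, written out *)
Definition frechet_subdiff (h : 'cV[R]_N -> \bar R) xb : set 'cV[R]_N :=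
  [set v | h xb \is a fin_num /\
     forall eps : R, 0 < eps -> exists2 delta : R, 0 < delta &
       forall z, 0 < enorm (z - xb) < delta ->
         (h z - h xb - (dotv v (z - xb))%:E >= (- (eps * enorm (z - xb)))%:E)%E].

Definition lim_subdiff (h : 'cV[R]_N -> \bar R) xb : set 'cV[R]_N :=
  [set v | h xb \is a fin_num /\
     exists (xs vs : nat -> 'cV[R]_N),
       [/\ xs @ \oo --> xb, (h \o xs) @ \oo --> h xb,
           (forall k, frechet_subdiff h (xs k) (vs k)) & vs @ \oo --> v]].

(* dist(0, S) = inf_{v in S} ||v||, with dist(0, emptyset) = +oo *)
Definition dist0 (S : set 'cV[R]_N) : \bar R :=
  ereal_inf [set (enorm v)%:E | v in S].

Definition stationary (h : 'cV[R]_N -> \bar R) xb : Prop := lim_subdiff h xb 0.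

End Defs.

(* Main.v *)
Require Import Defs.
From HB Require Import structures.
From mathcomp Require Import all_boot all_order all_algebra.
From mathcomp Require Import all_classical all_reals all_analysis.
From mathcomp Require Import ring lra.
Import Order.TTheory GRing.Theory Num.Theory.
Import numFieldNormedType.Exports.
Local Open Scope classical_set_scope.
Local Open Scope ring_scope.

Section Helpers.
Variables (R : realType) (N : nat).

Lemma dotv_self (v : 'cV[R]_N) : dotv v v = \sum_i v i 0 ^+ 2.
Proof. by rewrite /dotv mxE; apply: eq_bigr => i _; rewrite mxE expr2. Qed.

Lemma dotv_ge0 (v : 'cV[R]_N) : 0 <= dotv v v.
Proof. by rewrite dotv_self; apply: sumr_ge0 => i _; exact: sqr_ge0. Qed.

Lemma enorm_ge (v : 'cV[R]_N) : `|v| <= enorm v.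
Proof.
rewrite [leLHS]/Num.Def.normr /= mx_normrE; apply: bigmax_le => [|[i j] _] /=.
  exact: sqrtr_ge0.
rewrite (ord1 j) /enorm dotv_self -(sqrtr_sqr (v i 0)) ler_sqrt; last first.
  by apply: sumr_ge0 => k _; exact: sqr_ge0.
by rewrite (bigD1 i) //= lerDl; apply: sumr_ge0 => k _; exact: sqr_ge0.
Qed.

Lemma qnorm2_lin (T L : 'M[R]_N) (a : R) (d : 'cV[R]_N) :
  qnorm2 (T - L - a%:M) d = qnorm2 T d - qnorm2 L d - a * dotv d d.
Proof.
rewrite /qnorm2 /dotv !mulmxBl !mulmxDr !mulmxN !mxE.
rewrite mul_scalar_mx mulr_sumr; congr (_ - _); apply: eq_bigr => i _; by rewrite [(a *: d) i 0]mxE mulrCA.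
Qed.


Lemma lim_subdiff_closed (h : 'cV[R]_N -> \bar R) xb v :
  h xb \is a fin_num ->
  (forall e : R, 0 < e -> exists zw : 'cV[R]_N * 'cV[R]_N,
     [/\ `|zw.1 - xb| < e, h zw.1 \is a fin_num,
         `|fine (h zw.1) - fine (h xb)| < e,
         frechet_subdiff h zw.1 zw.2 & `|zw.2 - v| < e]) ->
  lim_subdiff h xb v.
Proof.
move=> hf H; split => //.
have [zw Hzw] := choice (fun n => H (n.+1%:R^-1) ltac:(by rewrite invr_gt0)).
exists (fst \o zw), (snd \o zw); split.
- apply/cvgrPdist_lt => e e0.
  near=> n; have [H1 _ _ _ _] := Hzw n.
  rewrite distrC; apply: (lt_trans H1).
  near: n; exact: (near_infty_natSinv_lt (PosNum e0)).
- rewrite -(fineK hf); apply/fine_cvgP; split.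
    by near=> n; have [_ H2 _ _ _] := Hzw n.
  apply/cvgrPdist_lt => e e0.
  near=> n; have [_ _ H3 _ _] := Hzw n.
  rewrite distrC; apply: (lt_trans H3).
  near: n; exact: (near_infty_natSinv_lt (PosNum e0)).
- by move=> n; have [_ _ _ H4 _] := Hzw n.
- apply/cvgrPdist_lt => e e0.
  near=> n; have [_ _ _ _ H5] := Hzw n.
  rewrite distrC; apply: (lt_trans H5).
  near: n; exact: (near_infty_natSinv_lt (PosNum e0)).
Unshelve. all: by end_near.
Qed.

End Helpers.

Theorem mainTheorem4 (R : realType) (N M : nat)
  (g : 'cV[R]_N -> \bar R) (f : 'cV[R]_N -> R) (L : 'M[R]_N) (a : R)
  (D : nat -> 'M[R]_(N, M)) (x : nat -> 'cV[R]_N) (beta : nat -> 'cV[R]_M)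
  (Lk Tk : nat -> 'M[R]_N) :
  proper_fn g -> lsc g -> cont_diff f ->
  pd L ->
  (* S = L^{-1/2}: the symm_mx positive definite square root of L^{-1},
     and grad (f o L^{-1/2}) is 1-Lipschitz *)
  (exists S : 'M[R]_N, [/\ pd S, S *m S *m L = 1%:M &
      forall z w, enorm (grad (fun u => f (S *m u)) z - grad (fun u => f (S *m u)) w)
                  <= enorm (z - w)]) ->
  (exists m : R, forall z, (m%:E <= (f z)%:E + g z)%E) ->
  0 < a ->
  (forall k, symm_mx (Lk k) /\ symm_mx (Tk k)) ->
  (forall k, let y := x k + D k *m beta k in
     (g (x k.+1) + (f y + dotv (grad f y) (x k.+1 - y)
                    + 2^-1 * qnorm2 (Tk k) (x k.+1 - y))%:E
        <= (f (x k))%:E + g (x k))%E) ->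
  (forall k, psd (Tk k - Lk k - a%:M)) ->
  (forall k, let y := x k + D k *m beta k in
     f (x k.+1) <= f y + dotv (grad f y) (x k.+1 - y)
                   + 2^-1 * qnorm2 (Lk k) (x k.+1 - y)) ->
  (exists C : R, forall k i j, `|Tk k i j| <= C) ->
  (forall k, ((f (x k.+1))%:E + g (x k.+1) <= (f (x k))%:E + g (x k))%E) /\
  ({within edom g, continuous g} ->
   (fun k => dist0 (lim_subdiff (fun z => (f z)%:E + g z) (x k.+1))) @ \oo --> 0%E ->
   forall xb : 'cV[R]_N,
     (exists phi : nat -> nat, {homo phi : n m / (n < m)%N} /\
        (fun n => x (phi n).+1) @ \oo --> xb) ->
     stationary (fun z => (f z)%:E + g z) xb).
Proof.
move=> [gNy _] Hlsc [Hdiff _] _ _ _ a0 _ HT HpsdT HL _.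
set F := (fun z => (f z)%:E + g z).
have Hmono : forall k, (F (x k.+1) <= F (x k))%E.
{ move=> k; move: (HT k) (HL k) (HpsdT k) => /=.
  set y := x k + D k *m beta k; set d := x k.+1 - y.
  move=> HTk HLk [_ /(_ d)]; rewrite qnorm2_lin => Hp.
  have HLT : f (x k.+1) <= f y + dotv (grad f y) d + 2^-1 * qnorm2 (Tk k) d.
  { apply: (le_trans HLk); rewrite lerD2l ler_wpM2l // ?invr_ge0 //.
    have := mulr_ge0 (ltW a0) (@dotv_ge0 _ _ d); lra. }
  apply: le_trans HTk; rewrite /F addeC; apply: leeD2l; by rewrite lee_fin. }
split; first exact: Hmono.
move=> Hc Hd xb [phi [Hphi Hx]].
set u := (fun n => x (phi n).+1) in Hx.
have phi_ge : forall n, (n <= phi n)%N.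
{ elim=> // n IH; exact: leq_ltn_trans IH (Hphi _ _ (ltnSn n)). }
have Hmono2 : forall m d : nat, (F (x (m + d)%N) <= F (x m))%E.
{ move=> m; elim=> [|d IH]; first by rewrite addn0.
  by rewrite addnS; apply: le_trans (Hmono _) IH. }
have Htr : forall P : nat -> Prop, (\forall k \near \oo, P k) ->
    \forall n \near \oo, P (phi n).
{ move=> P [K _ HK]; exists K => // n /= Kn; apply: HK; exact: leq_trans Kn (phi_ge n). }
have Hsub : forall e, 0 < e -> \forall k \near \oo,
    exists2 v, lim_subdiff F (x k.+1) v & enorm v < e.
{ move=> e e0.
  have Hd' : (fun k => dist0 (lim_subdiff F (x k.+1))) @ \oo --> (0:R)%:E := Hd.
  move/fine_cvgP: Hd' => [Hd1 /cvgrPdist_lt /(_ e e0) Hd2].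
  apply: filterS (filterI Hd1 Hd2) => k /= [Hk1 Hk2].
  have : (dist0 (lim_subdiff F (x k.+1)) < e%:E)%E.
    rewrite -(fineK Hk1) lte_fin; move: Hk2; rewrite sub0r normrN => h.
    exact: le_lt_trans (ler_norm _) h.
  by move/ereal_inf_lt => [_ [v Hv <-]]; rewrite lte_fin => ?; exists v. }
have [K _ HK] := Hsub 1 ltr01.
have HKfin : F (x K.+1) \is a fin_num by have [v [fv _] _] := HK K (leqnn K).
set B := fine (F (x K.+1)).
have HB : forall n, (K <= n)%N -> (F (x n.+1) <= B%:E)%E.
{ move=> n Kn; rewrite /B fineK //; have := Hmono2 K.+1 (n - K)%N.
  by rewrite addSn subnKC. }
have HuB : \forall n \near \oo, (F (u n) <= B%:E)%E.
{ exists K => // n /= Kn; apply: HB; exact: leq_trans Kn (phi_ge n). }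
have Hfc : forall z, {for z, continuous f} by move=> z; exact: differentiable_continuous.
have Hfu : (f \o u) @ \oo --> f xb := cvg_comp _ _ Hx (Hfc xb).
have gxb_lt : (g xb < +oo)%E.
{ rewrite ltey; apply/negP => /eqP gy.
  have := Hlsc xb (B - f xb + 1); rewrite gy ltry => /(_ isT) Hl.
  have Hl' : \forall n \near \oo, ((B - f xb + 1)%:E < g (u n))%E := Hx _ Hl.
  have Hf1 : \forall n \near \oo, `|f xb - (f \o u) n| < 1.
    by move/cvgrPdist_lt: Hfu => /(_ 1 ltr01).
  have [n [[h1 h2] h3]] := filter_ex (filterI (filterI HuB Hl') Hf1).
  move: h1; rewrite /F; apply/negP; rewrite -ltNge.
  apply: (@lt_le_trans _ _ ((f (u n))%:E + (B - f xb + 1)%:E)).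
    rewrite -EFinD lte_fin; have := le_lt_trans (ler_norm _) h3 => /= h; lra.
  by rewrite leeD2lE // ltW. }
have gxb_fin : g xb \is a fin_num.
  by rewrite fin_numE (gt_eqF (gNy xb)) (lt_eqF gxb_lt).
have Fxb_fin : F xb \is a fin_num by rewrite /F fin_numD gxb_fin.
set gb := fine (g xb).
have Hgc : g y @[y --> within (edom g) (nbhs xb)] --> g xb.
  rewrite (@nbhs_subspace_in _ (edom g) xb gxb_lt); exact: Hc xb.
have Hufin : \forall n \near \oo, g (u n) \is a fin_num.
{ apply: filterS (Htr _ (Hsub 1 ltr01)) => n [v [Hv _] _].
  by move: Hv; rewrite /F fin_numD => /andP[]. }
have HuA : \forall n \near \oo, edom g (u n).
{ apply: filterS Hufin => n; rewrite /edom /= ltey fin_numE => /andP[]. done. }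
have Huw : u n @[n --> \oo] --> within (edom g) (nbhs xb).
{ move=> P /= HP; apply: filterS2 (Hx _ HP) HuA => n h1 h2; exact: h1 h2. }
have Hgu := cvg_comp _ _ Huw Hgc.
rewrite -(fineK gxb_fin) in Hgu.
move/fine_cvgP: Hgu => [_ Hgu].
apply: lim_subdiff_closed Fxb_fin _ => e e0.
have e2 : 0 < e / 2 by rewrite divr_gt0.
have e4 : 0 < e / 4 by rewrite divr_gt0.
have H1 : \forall n \near \oo, `|xb - u n| < e / 2 by move/cvgrPdist_lt: Hx => /(_ _ e2).
have H2 : \forall n \near \oo, `|f xb - (f \o u) n| < e / 4
  by move/cvgrPdist_lt: Hfu => /(_ _ e4).
have H3 : \forall n \near \oo, `|fine (g xb) - (fine \o (g \o u)) n| < e / 4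
  by move/cvgrPdist_lt: Hgu => /(_ _ e4).
have H4 := Htr _ (Hsub _ e2).
have [n [[[[h1 h2] h3] h3'] h4]] :=
  filter_ex (filterI (filterI (filterI (filterI H1 H2) H3) Hufin) H4).
case: h4 => v [Fun_fin [xs [vs [Hxs HFxs Hfr Hvs]]]] Hv.
rewrite -(fineK Fun_fin) in HFxs; move/fine_cvgP: HFxs => [M2 M3].
have M1 : \forall m \near \oo, `|u n - xs m| < e / 2 by move/cvgrPdist_lt: Hxs => /(_ _ e2).
have {}M3 : \forall m \near \oo, `|fine (F (u n)) - (fine \o (F \o xs)) m| < e / 2
  by move/cvgrPdist_lt: M3 => /(_ _ e2).
have M4 : \forall m \near \oo, `|v - vs m| < e / 2 by move/cvgrPdist_lt: Hvs => /(_ _ e2).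
have [m [[[m1 m2] m3] m4]] := filter_ex (filterI (filterI (filterI M1 M2) M3) M4).
exists (xs m, vs m); split => //=.
- have := @ler_distD _ _ (u n) (xs m) xb.
  rewrite distrC in h1; rewrite distrC in m1; lra.
- have hF : `|fine (F (u n)) - fine (F xb)| < e / 2.
    rewrite /F !fineD //= (_ : forall a b c d : R, a + b - (c + d) = (a - c) + (b - d));
      last by move=> *; ring.
    have := ler_normD (f (u n) - f xb) (fine (g (u n)) - fine (g xb)).
    rewrite distrC in h2; rewrite distrC in h3; simpl in h2, h3; lra.
  have := @ler_distD _ _ (fine (F (u n))) (fine (F (xs m))) (fine (F xb)).
  rewrite distrC in m3; simpl in m3; lra.
- have := @ler_distD _ _ v (vs m) 0.
  rewrite subr0 distrC in m4 *; rewrite subr0; have := @enorm_ge _ _ v; lra.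
Unshelve. all: by end_near.
Qed.
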